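(* Let $\nu_1,\dots,\nu_\beta$ be the centers returned by an $\alpha$-approximation clustering algorithm (as in the context), and suppose $|\mu_r-\mu_s|\ge c\,\phi_\ast\left(\frac1{n_s}+\frac1{n_r}\right)$ for all distinct $r,s$. Then for every $\mathcal T_s$ there exists a center $\nu_s$ with $$|\nu_s-\mu_s|\le 2(\alpha+1)\frac{\phi_\ast}{n_s},$$ and, with the centers so labeled, $\gamma<\frac{2(\alpha+1)}{c}$.
   Context: Points $x_1,\dots,x_N$ are real numbers, each drawn independently from one of $\beta$ distributions with means $\mu_1,\dots,\mu_\beta$; $\mathcal T_s$ is the set of points from distribution $s$, $n_s=|\mathcal T_s|$; $\phi_\ast=\sum_i|x_i-\mathbb{E}(x_i)|$; $c>0$ a constant; $g(S)=\frac1{|S|}\sum_{x\in S}x$. The $\alpha$-approximation algorithm returns $\beta$ centers; $C(x)$ denotes the center of the cluster containing $x$, and the returned centers satisfy $\sum_i|x_i-C(x_i)|\le\alpha\cdot\mathrm{OPT}$, where $\mathrm{OPT}$ is the minimum of this cost over all choices of $\beta$ centers with points assigned to clusters. Define $\Delta_s=|\mu_s-\nu_s|$ and $\gamma=\max_{s,\,r\ne s}\frac{\Delta_s}{|\mu_r-\mu_s|}$. *)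

(* Defs.v *)
From HB Require Import structures.
From mathcomp Require Import all_boot all_order all_algebra.
From mathcomp Require Import classical_sets reals.
Set Implicit Arguments. Unset Strict Implicit. Unset Printing Implicit Defensive.
Import Order.TTheory GRing.Theory Num.Theory.
Local Open Scope ring_scope.
Local Open Scope classical_set_scope.

Definition kcost (R : realType) (N beta : nat) (x : 'I_N -> R)
  (c : 'I_beta -> R) (sigma : 'I_N -> 'I_beta) : R :=
  \sum_(i < N) `|x i - c (sigma i)|.

Definition OPT (R : realType) (N beta : nat) (x : 'I_N -> R) : R :=
  inf [set r : R | exists (c : 'I_beta -> R) (sigma : 'I_N -> 'I_beta),
                     r = kcost x c sigma].

(* phi_* = sum_i |x_i - E(x_i)|, with E(x_i) = mu_(lab i) *)
Definition phistar (R : realType) (N beta : nat) (x : 'I_N -> R)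
  (lab : 'I_N -> 'I_beta) (mu : 'I_beta -> R) : R :=
  \sum_(i < N) `|x i - mu (lab i)|.

Definition nsize (N beta : nat) (lab : 'I_N -> 'I_beta) (s : 'I_beta) : nat :=
  #|[set i | lab i == s]|.

(* gamma = max_{s, r <> s} Delta_s / |mu_r - mu_s|, Delta_s = |mu_s - nu_s|
   (all ratios are >= 0, so 0 is a neutral default for the max) *)
Definition gamma (R : realType) (beta : nat) (mu nu : 'I_beta -> R) : R :=
  \big[Num.max/0]_(s < beta) \big[Num.max/0]_(r < beta | r != s)
     (`|mu s - nu s| / `|mu r - mu s|).

(* Main.v *)
Require Import Defs.
From HB Require Import structures.
From mathcomp Require Import all_boot all_order all_algebra.
From mathcomp Require Import boolp classical_sets reals.
Import Order.TTheory GRing.Theory Num.Theory.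
Local Open Scope ring_scope.
Set Implicit Arguments. Unset Strict Implicit.

Lemma opt_le (R : realType) (N beta : nat) (x : 'I_N -> R)
  (lab : 'I_N -> 'I_beta) (mu : 'I_beta -> R) :
  OPT beta x <= phistar x lab mu.
Proof.
rewrite /OPT; apply: (ge_inf (E := [set r : R | exists (c : 'I_beta -> R) (sigma : 'I_N -> 'I_beta),
                     r = kcost x c sigma])).
  exists 0 => r [c [sg ->]]; rewrite /kcost; apply: sumr_ge0 => i _; exact: normr_ge0.
by exists mu, lab.
Qed.

Lemma exmin (R : realType) n (f : 'I_n -> R) (s : 'I_n) :
  exists j, forall k, f j <= f k.
Proof.
case: (@arg_minP _ _ _ s predT f erefl) => j _ H; exists j => k; exact: H.
Qed.

Lemma close (R : realType) (N beta : nat) (x : 'I_N -> R)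
  (lab : 'I_N -> 'I_beta) (mu : 'I_beta -> R) (alpha : R)
  (nu : 'I_beta -> R) (asg : 'I_N -> 'I_beta) (s : 'I_beta) :
  kcost x nu asg <= alpha * OPT beta x -> 0 <= alpha ->
  exists j, `|nu j - mu s| * (nsize lab s)%:R <= (alpha + 1) * phistar x lab mu.
Proof.
move=> Hk Ha; have [j Hj] := exmin (fun j => `|nu j - mu s|) s.
exists j.
have E : (nsize lab s)%:R = \sum_(i | lab i == s) (1 : R).
  rewrite sumr_const /nsize; congr (_%:R); apply: eq_card => i.
  by rewrite /in_mem /= /in_set /= asboolb.

rewrite E mulr_sumr.
apply: (le_trans (y := \sum_(i | lab i == s) (`|x i - mu (lab i)| + `|x i - nu (asg i)|))).
  apply: ler_sum => i /eqP Hi; rewrite Hi mulr1.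
  apply: le_trans (Hj (asg i)) _.
  rewrite (distrC (nu _)); apply: le_trans (ler_distD (x i) _ _) _.
  by rewrite distrC.
apply: (le_trans (y := \sum_i (`|x i - mu (lab i)| + `|x i - nu (asg i)|))).
  rewrite [X in _ <= X](bigID (fun i => lab i == s)) /= lerDl.
  by apply: sumr_ge0 => i _; rewrite addr_ge0.
rewrite big_split /= -/(phistar x lab mu) -/(kcost x nu asg).
have := opt_le x lab mu => Ho.
have : alpha * OPT beta x <= alpha * phistar x lab mu by rewrite ler_wpM2l.
move=> H2; rewrite mulrDl mul1r addrC.
by rewrite lerD2r; apply: le_trans Hk H2.
Qed.

From mathcomp Require Import ring lra.

Lemma ratio_le (R : realType) (D E A c phi n m : R) :
  0 < c -> 0 < A -> 0 < n -> 0 < m -> 0 <= phi -> 0 <= D ->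
  D * n <= A * phi -> c * phi * (n^-1 + m^-1) <= E ->
  D / E <= A / c.
Proof.
move=> hc hA hn hm hphi hD h1 h2.
have [->|E0] := eqVneq E 0; first by rewrite invr0 mulr0 divr_ge0 // ltW.
have ha : 0 < n^-1 by rewrite invr_gt0.
have hb : 0 < m^-1 by rewrite invr_gt0.
have h0 : 0 <= c * phi * (n^-1 + m^-1).
  by apply: mulr_ge0; [apply: mulr_ge0; [exact: ltW|] | lra].
have hE : 0 < E.
  have : 0 <= E by lra.
  by rewrite le_eqVlt eq_sym (negbTE E0).
rewrite ler_pdivrMr // mulrAC ler_pdivlMr //.
have h3 : D <= A * phi * n^-1 by rewrite ler_pdivlMr.
have h4 : 0 <= A * c * phi * m^-1 by rewrite !mulr_ge0 // ltW // invr_gt0.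
have h5 : D * c <= A * phi * n^-1 * c by rewrite ler_pM2r.
have h6 : A * (c * phi * (n^-1 + m^-1)) <= A * E by rewrite ler_pM2l.
have e1 : A * (c * phi * (n^-1 + m^-1)) = A * phi * n^-1 * c + A * c * phi * m^-1.
  by ring.
rewrite e1 in h6. rewrite (mulrC A E) in h6 *. lra.
Qed.

Unset Implicit Arguments. Set Strict Implicit.

Theorem lemma7 (R : realType) (N beta : nat) (x : 'I_N -> R)
  (lab : 'I_N -> 'I_beta) (mu : 'I_beta -> R) (c alpha : R)
  (nu : 'I_beta -> R) (asg : 'I_N -> 'I_beta) :
  0 < c -> 1 <= alpha ->
  (forall s : 'I_beta, (0 < nsize lab s)%N) ->
  kcost x nu asg <= alpha * OPT beta x ->
  (forall r s : 'I_beta, r != s ->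
     c * phistar x lab mu * ((nsize lab s)%:R^-1 + (nsize lab r)%:R^-1)
       <= `|mu r - mu s|) ->
  exists pi : 'I_beta -> 'I_beta,
    (forall s : 'I_beta,
       `|nu (pi s) - mu s| <= 2 * (alpha + 1) * phistar x lab mu / (nsize lab s)%:R)
    /\ gamma mu (fun s => nu (pi s)) < 2 * (alpha + 1) / c.
Proof.
move=> hc ha hn hk hsep.
have ha0 : 0 <= alpha by lra.
have hA : 0 < alpha + 1 by lra.
have hphi : 0 <= phistar x lab mu.
  by rewrite /phistar; apply: sumr_ge0 => i _; exact: normr_ge0.
have [pi Hpi] := choice (fun s => @close R N beta x lab mu alpha nu asg s hk ha0).
exists pi; split.
  move=> s; have hs : 0 < (nsize lab s)%:R :> R by rewrite ltr0n.
  rewrite ler_pdivlMr //; apply: le_trans (Hpi s) _.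
  rewrite -mulrA ler_peMl //; first by rewrite mulr_ge0 // ltW.
  lra.
have hK : 0 <= (alpha + 1) / c by rewrite divr_ge0 // ltW.
apply: (le_lt_trans (y := (alpha + 1) / c)); last first.
  rewrite ltr_pM2r ?invr_gt0 //; lra.
rewrite /gamma; elim/big_ind: _ => //.
  by move=> a b ? ?; rewrite ge_max; apply/andP.
move=> s _; elim/big_ind: _ => //.
  by move=> a b ? ?; rewrite ge_max; apply/andP.
move=> r hrs.
apply: (ratio_le (n := (nsize lab s)%:R) (m := (nsize lab r)%:R) (phi := phistar x lab mu)) => //.
- by rewrite ltr0n.
- by rewrite ltr0n.
- by rewrite distrC.
- exact: hsep.
Qed.
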